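(* Let $p>a\ge 1$ be integers and let $g_{i,j}\in\{1,-1\}$ for $i=1,\dots,a$ and $j=1,\dots,p-a$. Put $\eta_i'=\sigma_1^{g_{i,1}}\sigma_2^{g_{i,2}}\cdots\sigma_{p-a-1}^{g_{i,p-a-1}}$ and $\eta_i=\eta_i'\,\sigma_{p-a}^{g_{i,p-a}}$, and for $j\ge p-a$ put $\kappa_j=\sigma_{p-a+1}\sigma_{p-a+2}\cdots\sigma_j$ (so $\kappa_{p-a}$ is the empty word). Then the $p$-braid \[\prod_{k=1}^{a}\Big(\eta_k\,\kappa_{p-k}\,\sigma_{p-k+1}^{-1}\sigma_{p-k+2}^{-1}\cdots\sigma_{p-1}^{-1}\Big) =\eta_1\kappa_{p-1}\cdot\eta_2\kappa_{p-2}\sigma_{p-1}^{-1}\cdots\eta_{a-1}\kappa_{p-a+1}\sigma_{p-a+2}^{-1}\cdots\sigma_{p-1}^{-1}\cdot\eta_a\sigma_{p-a+1}^{-1}\cdots\sigma_{p-1}^{-1}\] is Markov equivalent to the braid $\eta_1'\eta_2'\cdots\eta_a'$.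
   Context: $\sigma_1,\sigma_2,\dots$ denote the standard Artin generators of the braid groups. Two braids (possibly with different numbers of strands) are Markov equivalent, written $\sim_M$, if their closures are isotopic links. *)

(* Defs.v *)
From Stdlib Require Import List Arith.
Import ListNotations.

(* A letter (i, true) is sigma_i, (i, false) is sigma_i^{-1}. *)
Definition letter := (nat * bool)%type.
Definition word := list letter.

Definition valid (n : nat) (w : word) : Prop :=
  Forall (fun l => 1 <= fst l /\ fst l < n) w.

Inductive braid_rel (n : nat) : word -> word -> Prop :=
  | br_inv1 i b : 1 <= i -> i < n -> braid_rel n [(i, b); (i, negb b)] []
  | br_comm i j b c : 1 <= i -> i < n -> 1 <= j -> j < n -> i + 2 <= j ->
      braid_rel n [(i, b); (j, c)] [(j, c); (i, b)]
  | br_yb i : 1 <= i -> i + 1 < n ->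
      braid_rel n [(i, true); (i+1, true); (i, true)]
                  [(i+1, true); (i, true); (i+1, true)].

(* By Markov's theorem
   this is exactly "closures are isotopic links". *)
Inductive markov_step : nat * word -> nat * word -> Prop :=
  | ms_rel n w1 u v w2 : valid n w1 -> valid n w2 -> braid_rel n u v ->
      markov_step (n, w1 ++ u ++ w2) (n, w1 ++ v ++ w2)
  | ms_conj n u v : valid n u -> valid n v ->
      markov_step (n, u ++ v) (n, v ++ u)
  | ms_stab n w b : 1 <= n -> valid n w ->
      markov_step (n, w) (S n, w ++ [(n, b)]).

Inductive markov_equiv : nat * word -> nat * word -> Prop :=
  | me_refl x : markov_equiv x x
  | me_step x y : markov_step x y -> markov_equiv x y
  | me_sym x y : markov_equiv x y -> markov_equiv y x
  | me_trans x y z : markov_equiv x y -> markov_equiv y z -> markov_equiv x z.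

(* The words of the lemma; g i j = true means g_{i,j} = 1, false means -1. *)
Definition eta' (p a : nat) (g : nat -> nat -> bool) (i : nat) : word :=
  map (fun j => (j, g i j)) (seq 1 (p - a - 1)).
Definition eta (p a : nat) (g : nat -> nat -> bool) (i : nat) : word :=
  eta' p a g i ++ [(p - a, g i (p - a))].
Definition kappa (p a j : nat) : word :=
  map (fun k => (k, true)) (seq (p - a + 1) (j - (p - a))).
Definition inv_tail (p k : nat) : word :=
  map (fun m => (m, false)) (seq (p - k + 1) (k - 1)).
Definition lhs_braid (p a : nat) (g : nat -> nat -> bool) : word :=
  flat_map (fun k => eta p a g k ++ kappa p a (p - k) ++ inv_tail p k) (seq 1 a).
Definition rhs_braid (p a : nat) (g : nat -> nat -> bool) : word :=
  flat_map (eta' p a g) (seq 1 a).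

(* Main.v *)
Require Import Defs.
From Stdlib Require Import List Arith Lia.
Import ListNotations.

Definition pos_run (lo len : nat) : word := map (fun k => (k, true)) (seq lo len).
Definition neg_run (lo len : nat) : word := map (fun k => (k, false)) (seq lo len).
Definition Edesc (lo len : nat) : word := rev (pos_run lo len).
Definition inv (w : word) : word := rev (map (fun l => (fst l, negb (snd l))) w).

Arguments pos_run : simpl never.
Arguments neg_run : simpl never.
Arguments Edesc : simpl never.

Lemma Forall_map_seq (P : letter -> Prop) b lo len :
  (forall k, lo <= k < lo + len -> P (k, b)) -> Forall P (map (fun k => (k, b)) (seq lo len)).
Proof.
  revert lo; induction len; intros lo H; simpl; constructor.
  - apply H; lia.
  - apply IHlen; intros; apply H; lia.
Qed.

Definition inr (lo hi : nat) (w : word) : Prop := Forall (fun l => lo <= fst l <= hi) w.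

Ltac fa := repeat match goal with x := _ |- _ => subst x end; unfold inr, valid, Edesc, inv in *; unfold pos_run, neg_run in *;
  repeat match goal with
  | |- Forall _ (_ ++ _) => apply Forall_app; split
  | |- Forall _ (_ :: _) => constructor
  | |- Forall _ [] => constructor
  | |- Forall _ (rev _) => apply Forall_rev
  | |- Forall _ (map (fun k => (k, _)) (seq _ _)) => apply Forall_map_seq; intros
  | |- Forall _ (map _ _) => apply Forall_map
  | H : Forall _ ?w |- Forall _ ?w => eapply Forall_impl; [|exact H]; intros [? ?]; simpl; intros; lia
  end; simpl in *; try lia.

Inductive beq (n : nat) : word -> word -> Prop :=
| beq_refl w : beq n w w
| beq_step w1 u v w2 : valid n w1 -> valid n w2 -> braid_rel n u v ->
    beq n (w1 ++ u ++ w2) (w1 ++ v ++ w2)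
| beq_sym u v : beq n u v -> beq n v u
| beq_trans u v w : beq n u v -> beq n v w -> beq n u w.

Lemma beq_me n u v : beq n u v -> markov_equiv (n, u) (n, v).
Proof.
  induction 1.
  - apply me_refl.
  - apply me_step; apply ms_rel; auto.
  - apply me_sym; auto.
  - eapply me_trans; eauto.
Qed.

Lemma beq_ctx n w1 w2 u v : valid n w1 -> valid n w2 -> beq n u v ->
  beq n (w1 ++ u ++ w2) (w1 ++ v ++ w2).
Proof.
  intros H1 H2 H; induction H.
  - apply beq_refl.
  - replace (w1 ++ (w0 ++ u ++ w3) ++ w2) with ((w1 ++ w0) ++ u ++ (w3 ++ w2))
      by (rewrite <- !app_assoc; reflexivity).
    replace (w1 ++ (w0 ++ v ++ w3) ++ w2) with ((w1 ++ w0) ++ v ++ (w3 ++ w2))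
      by (rewrite <- !app_assoc; reflexivity).
    apply beq_step; auto; unfold valid in *; apply Forall_app; auto.
  - apply beq_sym; auto.
  - eapply beq_trans; eauto.
Qed.

Lemma beq_ctx_eq n w1 w2 u v x y : x = w1 ++ u ++ w2 -> y = w1 ++ v ++ w2 ->
  valid n w1 -> valid n w2 -> beq n u v -> beq n x y.
Proof. intros -> ->; apply beq_ctx. Qed.

Lemma beq_eq n x y : x = y -> beq n x y.
Proof. intros ->; apply beq_refl. Qed.

Ltac norm := repeat rewrite <- app_assoc; simpl; repeat rewrite <- app_assoc; rewrite ?app_nil_r; simpl.

Definition stair n m k := pos_run (m+1) (n-k-m) ++ neg_run (n-k+1) (k-1).
Definition fac n m (x : word * bool) k := fst x ++ [(m, snd x)] ++ stair n m k.
Fixpoint W n m (L : list (word * bool)) k : word :=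
  match L with [] => [] | x :: L' => fac n m x k ++ W n m L' (S k) end.

Lemma W_length_S n m x L k : W n m (x :: L) k = fac n m x k ++ W n m L (S k).
Proof. reflexivity. Qed.

Lemma valid_fac n m Y h k : 1 <= m -> valid m Y -> 1 <= k -> m + k <= n -> valid n (fac n m (Y,h) k).
Proof. intros; unfold fac, stair; simpl fst; simpl snd; fa. Qed.

Lemma valid_W n m L k : 1 <= m -> Forall (fun x => valid m (fst x)) L -> 1 <= k ->
  k + length L + m <= n + 1 -> valid n (W n m L k).
Proof.
  revert k; induction L as [|[Y h] L IH]; intros k Hm HL Hk Hn; simpl.
  - constructor.
  - inversion HL; subst. apply Forall_app; split.
    + apply valid_fac; simpl in *; auto; lia.
    + apply IH; auto; simpl in *; lia.
Qed.




Lemma valid_le n' n w : valid n' w -> n' <= n -> valid n w.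
Proof. intros; fa. Qed.

Ltac vd := first [ solve [fa] | apply valid_W; auto; simpl in *; lia | apply valid_fac; auto; lia
  | eapply valid_le; [apply valid_fac; auto; lia | lia]
  | eapply valid_le; [apply valid_W; auto; simpl in *; lia | lia] ].

Ltac step w1 w2 u v H :=
  eapply beq_trans; [eapply (beq_ctx_eq _ w1 w2 u v); [norm; reflexivity | reflexivity | | | exact H] |]; [vd | vd | ].
Ltac fin := apply beq_eq; norm; try reflexivity.

Lemma beq_rel n u v : braid_rel n u v -> beq n u v.
Proof. intros H. pose proof (beq_step n [] u v [] (Forall_nil _) (Forall_nil _) H) as H'.
  simpl in H'; rewrite !app_nil_r in H'; exact H'. Qed.

Lemma r_cancel n i b : 1 <= i -> i < n -> beq n [(i, b); (i, negb b)] [].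
Proof. intros; apply beq_rel; constructor; auto. Qed.

Lemma r_comm n i j b c : 1 <= i -> i < n -> 1 <= j -> j < n -> (i + 2 <= j \/ j + 2 <= i) ->
  beq n [(i, b); (j, c)] [(j, c); (i, b)].
Proof.
  intros. destruct H3.
  - apply beq_rel; constructor; auto.
  - apply beq_sym, beq_rel; constructor; auto.
Qed.

Lemma r_braid n i : 1 <= i -> i + 1 < n ->
  beq n [(i, true); (i+1, true); (i, true)] [(i+1, true); (i, true); (i+1, true)].
Proof. intros; apply beq_rel; constructor; auto. Qed.

Lemma r_I2 n i : 1 <= i -> i + 1 < n ->
  beq n [(i+1, true); (i, true); (i+1, false)] [(i, false); (i+1, true); (i, true)].
Proof.
  intros.
  apply beq_trans with ([(i,false);(i,true)] ++ [(i+1, true); (i, true); (i+1, false)]).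
  { apply beq_sym. apply (beq_ctx_eq n [] [(i+1, true); (i, true); (i+1, false)] [(i,false);(i,true)] []); [reflexivity|reflexivity|constructor|fa|].
    apply (r_cancel n i false); lia. }
  step [(i,false)] [(i+1,false)] [(i, true); (i+1, true); (i, true)] [(i+1, true); (i, true); (i+1, true)] (r_braid n i H H0).
  step [(i,false);(i+1,true);(i,true)] (@nil letter) [(i+1,true);(i+1,false)] (@nil letter) (r_cancel n (i+1) true ltac:(lia) ltac:(lia)).
  fin.
Qed.

Lemma inv_cons l w : inv (l :: w) = inv w ++ [(fst l, negb (snd l))].
Proof. reflexivity. Qed.

Lemma inv_inv w : inv (inv w) = w.
Proof. unfold inv. rewrite map_rev, rev_involutive, map_map.
  induction w as [|[i b] w IH]; simpl; auto. rewrite Bool.negb_involutive. f_equal. exact IH. Qed.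

Lemma valid_inv n w : valid n w -> valid n (inv w).
Proof. intros; fa. Qed.

Lemma inv_cancel n w : valid n w -> beq n (w ++ inv w) [].
Proof.
  induction w as [|[i b] w IH]; intros H; simpl.
  - apply beq_refl.
  - inversion H; subst. rewrite inv_cons; simpl.
    step [(i,b)] [(i,negb b)] (w ++ inv w) (@nil letter) (IH H3).
    simpl in H2. apply r_cancel; lia.
Qed.

Lemma beq_inv n u v : valid n u -> valid n v -> beq n u v -> beq n (inv u) (inv v).
Proof.
  intros Hu Hv H. apply beq_sym.
  apply beq_trans with (inv v ++ u ++ inv u).
  { apply beq_sym. apply (beq_ctx_eq n (inv v) [] (u ++ inv u) []); [norm; reflexivity| rewrite app_nil_r; reflexivity | apply valid_inv; auto | constructor | apply inv_cancel; auto]. }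
  apply beq_trans with (inv v ++ v ++ inv u).
  { apply beq_ctx; auto; apply valid_inv; auto. }
  apply (beq_ctx_eq n [] (inv u) (inv v ++ v) []); [norm; reflexivity| reflexivity | constructor | apply valid_inv; auto | ].
  pose proof (inv_cancel n (inv v) (valid_inv n v Hv)) as K. rewrite inv_inv in K. exact K.
Qed.

Lemma r_I2f n i : 1 <= i -> i + 1 < n ->
  beq n [(i+1, true); (i, false); (i+1, false)] [(i, false); (i+1, false); (i, true)].
Proof.
  intros. assert (K := r_I2 n i H H0). apply beq_inv in K; [|fa|fa].
  unfold inv in K; simpl in K. exact K.
Qed.


Lemma comm_lw n l X lo hi : 1 <= fst l < n -> 1 <= lo -> hi < n -> inr lo hi X ->
  (hi + 2 <= fst l \/ fst l + 2 <= lo) -> beq n ([l] ++ X) (X ++ [l]).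
Proof.
  intros Hl Hlo Hhi HX Hf. induction X as [|[j c] X IH].
  - apply beq_refl.
  - inversion HX; subst. simpl in H1. destruct l as [i b]; simpl in *.
    step (@nil letter) X [(i,b);(j,c)] [(j,c);(i,b)] (r_comm n i j b c ltac:(lia) ltac:(lia) ltac:(lia) ltac:(lia) ltac:(lia)).
    step [(j,c)] (@nil letter) ([(i,b)] ++ X) (X ++ [(i,b)]) (IH H2).
    fin.
Qed.

Lemma comm_ww n U X lo1 hi1 lo hi : inr lo1 hi1 U -> 1 <= lo1 -> hi1 < n ->
  1 <= lo -> hi < n -> inr lo hi X ->
  (hi + 2 <= lo1 \/ hi1 + 2 <= lo) -> beq n (U ++ X) (X ++ U).
Proof.
  intros HU H1 H2 Hlo Hhi HX Hf. induction U as [|l U IH].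
  - rewrite app_nil_r; apply beq_refl.
  - inversion HU; subst.
    step [l] (@nil letter) (U ++ X) (X ++ U) (IH H4).
    step (@nil letter) U ([l] ++ X) (X ++ [l]) (comm_lw n l X lo hi ltac:(lia) Hlo Hhi HX ltac:(lia)).
    fin.
Qed.

Lemma pos_run_S lo len : pos_run lo (S len) = pos_run lo len ++ [(lo+len,true)].
Proof. unfold pos_run; rewrite seq_S, map_app; reflexivity. Qed.
Lemma neg_run_S lo len : neg_run lo (S len) = neg_run lo len ++ [(lo+len,false)].
Proof. unfold neg_run; rewrite seq_S, map_app; reflexivity. Qed.
Lemma Edesc_S lo len : Edesc lo (S len) = (lo+len,true) :: Edesc lo len.
Proof. unfold Edesc; rewrite pos_run_S, rev_app_distr; reflexivity. Qed.
Lemma Edesc_S' lo len : Edesc lo (S len) = Edesc (S lo) len ++ [(lo,true)].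
Proof. reflexivity. Qed.
Lemma Edesc_split lo x y : Edesc lo (x + y) = Edesc (lo + x) y ++ Edesc lo x.
Proof. unfold Edesc, pos_run; rewrite seq_app, map_app, rev_app_distr; reflexivity. Qed.
Lemma Edesc_0 lo : Edesc lo 0 = []. Proof. reflexivity. Qed.
Lemma neg_run_0 lo : neg_run lo 0 = []. Proof. reflexivity. Qed.
Lemma pos_run_0 lo : pos_run lo 0 = []. Proof. reflexivity. Qed.

Lemma neg_Edesc n lo len : 1 <= lo -> lo + len <= n -> beq n (neg_run lo len ++ Edesc lo len) [].
Proof.
  intros H1 H2. induction len.
  - apply beq_refl.
  - rewrite neg_run_S, Edesc_S.
    step (neg_run lo len) (Edesc lo len) [(lo+len,false);(lo+len,true)] (@nil letter) (r_cancel n (lo+len) false ltac:(lia) ltac:(lia)).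
    eapply beq_trans; [|apply IHlen; lia]. fin.
Qed.

Lemma shift1 n c j i : 1 <= c -> c + j < n -> c + 1 <= i <= c + j ->
  beq n (Edesc c (S j) ++ [(i,false)]) ([(i-1,false)] ++ Edesc c (S j)).
Proof.
  intros Hc Hn Hi.
  set (r := i - 1 - c).
  replace (S j) with ((r + 2) + (j - r - 1)) by lia.
  rewrite Edesc_split, Edesc_split.
  replace i with (S (c + r)) by lia.
  replace (S (c + r) - 1) with (c + r) by lia.
  set (k := c + r).
  replace (Edesc k 2) with [(S k,true);(k,true)] by reflexivity.
  set (Top := Edesc (c + (r + 2)) (j - r - 1)).
  set (Bot := Edesc c r).
  assert (HB : inr c (k - 1) Bot) by (unfold Bot, k; fa).
  assert (HT : inr (k+2) (c + j) Top) by (unfold Top, k; fa).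
  assert (K1 := comm_ww n Bot [(S k,false)] c (k-1) (S k) (S k) HB ltac:(lia) ltac:(lia) ltac:(lia) ltac:(lia) ltac:(fa) ltac:(lia)).
  step (Top ++ [(S k,true);(k,true)]) (@nil letter) (Bot ++ [(S k, false)]) ([(S k, false)] ++ Bot) K1.
  assert (K2 := r_I2 n k ltac:(lia) ltac:(lia)). rewrite Nat.add_1_r in K2.
  step Top Bot [(S k,true);(k,true);(S k,false)] [(k,false);(S k,true);(k,true)] K2.
  assert (K3 := comm_ww n Top [(k,false)] (k+2) (c+j) k k HT ltac:(lia) ltac:(lia) ltac:(lia) ltac:(lia) ltac:(fa) ltac:(lia)).
  step (@nil letter) ([(S k,true);(k,true)] ++ Bot) (Top ++ [(k,false)]) ([(k,false)] ++ Top) K3.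
  fin.
Qed.

Lemma shift_run n c j t : 1 <= c -> c + j < n -> t <= j ->
  beq n (Edesc c (S j) ++ neg_run (S c) t) (neg_run c t ++ Edesc c (S j)).
Proof.
  intros Hc Hn. induction t; intros Ht.
  - fin.
  - rewrite !neg_run_S.
    step (@nil letter) [(S c + t, false)] (Edesc c (S j) ++ neg_run (S c) t) (neg_run c t ++ Edesc c (S j)) (IHt ltac:(lia)).
    assert (K := shift1 n c j (S c + t) ltac:(lia) ltac:(lia) ltac:(lia)).
    replace (S c + t - 1) with (c + t) in K by lia.
    step (neg_run c t) (@nil letter) (Edesc c (S j) ++ [(S c + t, false)]) ([(c + t, false)] ++ Edesc c (S j)) K.
    fin.
Qed.

Lemma I2h n i h : 1 <= i -> i + 1 < n ->
  beq n [(S i, true); (i, h); (S i, false)] [(i, false); (S i, h); (i, true)].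
Proof.
  intros. rewrite <- Nat.add_1_r. destruct h.
  - apply r_I2; auto.
  - apply r_I2f; auto.
Qed.

Lemma conjI n i h t : 1 <= i -> i + t < n ->
  beq n (Edesc (S i) t ++ [(i,h)] ++ neg_run (S i) t) (neg_run i t ++ [(i+t,h)] ++ Edesc i t).
Proof.
  intros Hi. induction t; intros Hn.
  - rewrite Nat.add_0_r; fin.
  - rewrite Edesc_S, neg_run_S, neg_run_S, Edesc_S. simpl plus.
    rewrite Nat.add_succ_r.
    set (K := i + t).
    step [(S K,true)] [(S K, false)] (Edesc (S i) t ++ [(i,h)] ++ neg_run (S i) t) (neg_run i t ++ [(i+t,h)] ++ Edesc i t) (IHt ltac:(lia)).
    assert (HN : inr i (K-1) (neg_run i t)) by (unfold K; fa).
    assert (HE : inr i (K-1) (Edesc i t)) by (unfold K; fa).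
    assert (K1 := comm_ww n [(S K, true)] (neg_run i t) (S K) (S K) i (K-1) ltac:(fa) ltac:(lia) ltac:(lia) ltac:(lia) ltac:(lia) HN ltac:(lia)).
    step (@nil letter) ([(K,h)] ++ Edesc i t ++ [(S K,false)]) ([(S K, true)] ++ neg_run i t) (neg_run i t ++ [(S K, true)]) K1.
    assert (K2 := comm_ww n (Edesc i t) [(S K, false)] i (K-1) (S K) (S K) HE ltac:(lia) ltac:(lia) ltac:(lia) ltac:(lia) ltac:(fa) ltac:(lia)).
    step (neg_run i t ++ [(S K, true); (K,h)]) (@nil letter) (Edesc i t ++ [(S K, false)]) ([(S K, false)] ++ Edesc i t) K2.
    assert (K3 := I2h n K h ltac:(lia) ltac:(lia)).
    step (neg_run i t) (Edesc i t) [(S K, true); (K, h); (S K, false)] [(K, false); (S K, h); (K, true)] K3.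
    fin.
Qed.


Lemma carry_step n m c j Y h : 1 <= m -> m + 1 <= c -> n = c + j + 1 -> valid m Y ->
  beq n (Edesc (S c) j ++ fac n m (Y,h) (S j)) (fac (n-1) m (Y,h) (S j) ++ Edesc c (S j)).
Proof.
  intros Hm Hc Hn HY. unfold fac, stair; simpl fst; simpl snd.
  replace (n - S j - m) with (S (c - 1 - m)) by lia.
  replace (n - S j + 1) with (S c) by lia.
  replace (S j - 1) with j by lia.
  replace (n - 1 - S j - m) with (c - 1 - m) by lia.
  replace (n - 1 - S j + 1) with c by lia.
  rewrite pos_run_S. replace (m + 1 + (c - 1 - m)) with c by lia.
  set (P := pos_run (m + 1) (c - 1 - m)).
  assert (HX : inr 1 (c-1) (Y ++ [(m,h)] ++ P)) by (unfold P; fa).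
  assert (HU : inr (S c) (c+j) (Edesc (S c) j)) by fa.
  assert (K1 := comm_ww n _ _ (S c) (c+j) 1 (c-1) HU ltac:(lia) ltac:(lia) ltac:(lia) ltac:(lia) HX ltac:(lia)).
  step (@nil letter) ([(c,true)] ++ neg_run (S c) j) (Edesc (S c) j ++ (Y ++ [(m, h)] ++ P)) ((Y ++ [(m, h)] ++ P) ++ Edesc (S c) j) K1.
  assert (K2 := shift_run n c j j ltac:(lia) ltac:(lia) ltac:(lia)).
  rewrite Edesc_S' in K2.
  step (Y ++ [(m, h)] ++ P) (@nil letter) ((Edesc (S c) j ++ [(c, true)]) ++ neg_run (S c) j) (neg_run c j ++ Edesc (S c) j ++ [(c,true)]) K2.
  fin.
Qed.

Lemma carry n m a L j : 1 <= m -> n = m + a + 1 -> j + length L <= a ->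
  Forall (fun x => valid m (fst x)) L ->
  beq n (Edesc (n-j) j ++ W n m L (S j))
        (W (n-1) m L (S j) ++ Edesc (n - j - length L) (j + length L)).
Proof.
  intros Hm Hn. revert j. induction L as [|[Y h] L IH]; intros j Hj HL.
  - simpl. rewrite Nat.sub_0_r, Nat.add_0_r, app_nil_r. fin.
  - inversion HL; subst. simpl in H1. simpl length in Hj.
    rewrite !W_length_S.
    assert (K := carry_step (m + a + 1) m (m + a - j) j Y h Hm ltac:(lia) ltac:(lia) H1).
    replace (S (m + a - j)) with (m + a + 1 - j) in K by lia.
    step (@nil letter) (W (m + a + 1) m L (S (S j))) (Edesc (m + a + 1 - j) j ++ fac (m + a + 1) m (Y, h) (S j)) (fac (m + a + 1 - 1) m (Y, h) (S j) ++ Edesc (m + a - j) (S j)) K.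
    assert (K2 := IH (S j) ltac:(lia) H2).
    replace (m + a + 1 - S j) with (m + a - j) in K2 by lia.
    step (fac (m + a + 1 - 1) m (Y, h) (S j)) (@nil letter) (Edesc (m + a - j) (S j) ++ W (m + a + 1) m L (S (S j))) (W (m + a + 1 - 1) m L (S (S j)) ++ Edesc (m + a - j - length L) (S j + length L)) K2.
    simpl length.
    replace (m + a + 1 - j - S (length L)) with (m + a - j - length L) by lia.
    replace (j + S (length L)) with (S j + length L) by lia.
    fin.
Qed.

Lemma W_app n m L0 x k : W n m (L0 ++ [x]) k = W n m L0 k ++ fac n m x (k + length L0).
Proof.
  revert k; induction L0; intros k; simpl.
  - rewrite Nat.add_0_r, app_nil_r; reflexivity.
  - rewrite IHL0, app_assoc. replace (S k + length L0) with (k + S (length L0)) by lia. reflexivity.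
Qed.

Lemma me_eq x y : x = y -> markov_equiv x y.
Proof. intros ->; apply me_refl. Qed.

Lemma main_gen L : forall m R, 1 <= m -> Forall (fun x => valid m (fst x)) L -> valid m R ->
  markov_equiv (m + length L, W (m + length L) m L 1 ++ R) (m, concat (map fst L) ++ R).
Proof.
  induction L as [|[Y h] L0 IH] using rev_ind; intros m R Hm HL HR.
  - simpl. rewrite Nat.add_0_r. apply me_refl.
  - apply Forall_app in HL; destruct HL as [HL0 HY]. inversion HY; subst. simpl in H1.
    rewrite length_app; simpl length. set (a := length L0).
    replace (m + (a + 1)) with (m + a + 1) by lia.
    rewrite W_app. rewrite map_app, concat_app. simpl. rewrite app_nil_r, <- app_assoc.
    assert (K1 : beq (m + a + 1) (W (m + a + 1) m L0 1) (W (m + a) m L0 1 ++ Edesc (S m) a)).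
    { assert (K := carry (m + a + 1) m a L0 0 Hm eq_refl ltac:(lia) HL0).
      replace (m + a + 1 - 0 - length L0) with (S m) in K by (unfold a; lia).
      replace (m + a + 1 - 1) with (m + a) in K by lia. exact K. }
    unfold fac, stair; simpl fst; simpl snd.
    replace (m + a + 1 - S (length L0) - m) with 0 by (unfold a; lia).
    replace (m + a + 1 - S (length L0) + 1) with (S m) by (unfold a; lia).
    replace (S (length L0) - 1) with a by (unfold a; lia).
    rewrite pos_run_0, app_nil_l, <- (app_assoc (concat (map fst L0))).
    set (X := W (m + a) m L0 1).
    assert (HX1 : valid (m + a + 1) X) by (unfold X; eapply valid_le; [apply valid_W; auto; lia | lia]).
    assert (B : beq (m + a + 1)
      (W (m + a + 1) m L0 1 ++ Y ++ [(m, h)] ++ neg_run (S m) a ++ R)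
      (X ++ Y ++ neg_run m a ++ [(m + a, h)] ++ Edesc m a ++ R)).
    { step (@nil letter) (Y ++ [(m, h)] ++ neg_run (S m) a ++ R) (W (m + a + 1) m L0 1) (X ++ Edesc (S m) a) K1.
      assert (HE : inr (S m) (m + a) (Edesc (S m) a)) by fa.
      assert (HYr : inr 1 (m - 1) Y) by fa.
      assert (K2 := comm_ww (m + a + 1) _ _ (S m) (m + a) 1 (m - 1) HE ltac:(lia) ltac:(lia) ltac:(lia) ltac:(lia) HYr ltac:(lia)).
      step X ([(m, h)] ++ neg_run (S m) a ++ R) (Edesc (S m) a ++ Y) (Y ++ Edesc (S m) a) K2.
      assert (K3 := conjI (m + a + 1) m h a Hm ltac:(lia)).
      step (X ++ Y) R (Edesc (S m) a ++ [(m, h)] ++ neg_run (S m) a) (neg_run m a ++ [(m + a, h)] ++ Edesc m a) K3.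
      fin. }
    apply beq_me in B. repeat rewrite <- app_assoc. eapply me_trans; [exact B|].
    set (Z := X ++ Y ++ neg_run m a).
    assert (HX : valid (m + a) X) by (unfold X; apply valid_W; auto; lia).
    assert (HZ : valid (m + a) Z) by (unfold Z; fa).
    assert (HEm : valid (m + a) (Edesc m a)) by fa.
    assert (HR' : valid (m + a) R) by fa.
    eapply me_trans.
    { apply me_eq. replace (X ++ Y ++ neg_run m a ++ [(m + a, h)] ++ Edesc m a ++ R)
        with ((Z ++ [(m + a, h)]) ++ (Edesc m a ++ R)) by (unfold Z; norm; reflexivity). reflexivity. }
    eapply me_trans.
    { apply me_step, ms_conj; fa. }
    eapply me_trans.
    { apply me_sym. replace (m + a + 1) with (S (m + a)) by lia.
      replace ((Edesc m a ++ R) ++ Z ++ [(m + a, h)]) with ((Edesc m a ++ R ++ Z) ++ [(m + a, h)]) by (norm; reflexivity).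
      apply me_step, ms_stab; [lia | fa]. }
    eapply me_trans.
    { apply me_step, (ms_conj (m + a) (Edesc m a) (R ++ Z)); fa. }
    eapply me_trans.
    { apply beq_me. apply (beq_ctx_eq (m + a) (R ++ X ++ Y) [] (neg_run m a ++ Edesc m a) []).
      - unfold Z; norm; reflexivity.
      - reflexivity.
      - fa.
      - constructor.
      - apply neg_Edesc; lia. }
    rewrite app_nil_r.
    eapply me_trans.
    { apply me_step, (ms_conj (m + a) R (X ++ Y)); fa. }
    rewrite <- app_assoc. unfold X.
    replace (m + a) with (m + length L0) by reflexivity.
    apply IH; auto. fa.
Qed.

Lemma W_map n m (f : nat -> word * bool) len : forall k,
  W n m (map f (seq k len)) k = flat_map (fun k => fac n m (f k) k) (seq k len).
Proof. induction len; intros k; simpl; auto. rewrite IHlen; reflexivity. Qed.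

Theorem lemma3p1 (p a : nat) (g : nat -> nat -> bool) :
  1 <= a -> a < p ->
  markov_equiv (p, lhs_braid p a g) (p - a, rhs_braid p a g).
Proof.
  intros Ha Hp.
  set (L := map (fun k => (eta' p a g k, g k (p - a))) (seq 1 a)).
  assert (HL : Forall (fun x => valid (p - a) (fst x)) L).
  { unfold L. apply Forall_map. apply Forall_forall. intros k _. simpl.
    unfold eta', valid. apply Forall_map. apply Forall_forall. intros j Hj.
    apply in_seq in Hj. simpl. lia. }
  assert (K := main_gen L (p - a) [] ltac:(lia) HL (Forall_nil _)).
  rewrite !app_nil_r in K.
  replace (p - a + length L) with p in K by (unfold L; rewrite length_map, length_seq; lia).
  replace (lhs_braid p a g) with (W p (p - a) L 1).
  replace (rhs_braid p a g) with (concat (map fst L)).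
  - exact K.
  - unfold rhs_braid, L. rewrite flat_map_concat_map, map_map. reflexivity.
  - unfold L. rewrite W_map. unfold lhs_braid. apply flat_map_ext. intros k.
    unfold fac, stair, eta, kappa, inv_tail, pos_run, neg_run; simpl fst; simpl snd.
    rewrite <- !app_assoc. reflexivity.
Qed.
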